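(* Let $c>0$, let $\widetilde{\theta_c}$ be as in the context, and let $X:\mathbb{C}\to\widetilde{E(2)}$ be the map described in the context with $\theta=\widetilde{\theta_c}$. Then there exists $Z\in\mathbb{C}\setminus\{0\}$ such that $X(z+Z)=X(z)$ for all $z\in\mathbb{C}$.
   Context: $\widetilde{E(2)}$ is $\mathbb{R}^3$ with coordinates $(x_1,x_2,x_3)$ and group law $(a_1,b_1,c_1)*(a_2,b_2,c_2)=(a_1+a_2\cos c_1-b_2\sin c_1,\ b_1+a_2\sin c_1+b_2\cos c_1,\ c_1+c_2)$, with the left-invariant metric $\lambda_1^2(\cos x_3\,dx_1+\sin x_3\,dx_2)^2+\lambda_2^2(-\sin x_3\,dx_1+\cos x_3\,dx_2)^2+\frac{1}{\lambda_1^2\lambda_2^2}dx_3^2$, where either $\lambda_1>\lambda_2>0$ or $\lambda_1=\lambda_2=1$. For $c>0$: $\theta_c^+=\pi$ if $c>\sqrt2\lambda_1$, $\theta_c^+=\arccos(1-c^2/\lambda_1^2)$ if $0<c\le\sqrt2\lambda_1$; $\Omega=\{(c,\theta):c>0,\ |\theta|<\theta_c^+\}$. For $(c,\theta)\in\Omega$: $D=\sin\theta/c$; $\varphi$ is the global solution of $\varphi'(u)=\sqrt{c^2+2\cos\theta\,B(u)-D^2B(u)^2}$, $\varphi(0)=0$, with $B(u)=\lambda_1^2\cos^2\varphi(u)+\lambda_2^2\sin^2\varphi(u)$ ($\varphi$ is an increasing bijection of $\mathbb{R}$); $U>0$ is the unique number with $\varphi(U)=\pi$; $f$ solves $f'=DB$,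 $f(0)=0$; $G(u)=\int_0^u\frac{c-\varphi'(s)}{B(s)}ds$; $H(c,\theta)=Df(U)+cG(U)$. For each $c>0$, $\widetilde{\theta_c}$ denotes the unique $\theta\in(0,\pi/2)\cap(0,\theta_c^+)$ with $H(c,\theta)=0$. The map $X=(x_1,x_2,x_3)$ is: $x_3(u+iv)=-\lambda_1\lambda_2Dv+\lambda_1\lambda_2G(u)$; with $A=f(u)+cv$, $M_1=c\cos x_3\cosh A-\lambda_1\lambda_2D\sin x_3\sinh A$, $M_2=c\cos x_3\sinh A-\lambda_1\lambda_2D\sin x_3\cosh A$, $M_3=c\sin x_3\sinh A+\lambda_1\lambda_2D\cos x_3\cosh A$, $M_4=c\sin x_3\cosh A+\lambda_1\lambda_2D\cos x_3\sinh A$, $x_1=-\frac{1}{(c^2+\lambda_1^2\lambda_2^2D^2)B}[\frac{1}{\lambda_1}f'\cos\varphi\,M_1-\frac{1}{\lambda_1}(c-\varphi')\sin\varphi\,M_2-\frac{1}{\lambda_2}(c-\varphi')\cos\varphi\,M_3-\frac{1}{\lambda_2}f'\sin\varphi\,M_4]$, $x_2=-\frac{1}{(c^2+\lambda_1^2\lambda_2^2D^2)B}[\frac{1}{\lambda_1}f'\cos\varphi\,M_4-\frac{1}{\lambda_1}(c-\varphi')\sin\varphi\,M_3+\frac{1}{\lambda_2}(c-\varphi')\cos\varphi\,M_2+\frac{1}{\lambda_2}f'\sin\varphi\,M_1]$, all functions of $u$ evaluated at $u$. (It is a conformal minimal immersion.) *)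

(* Defs.v *)
From Stdlib Require Import Reals Lra.
From Coquelicot Require Import Coquelicot.
Open Scope R_scope.

Definition theta_plus (l1 c : R) : R :=
  if Rlt_dec (sqrt 2 * l1) c then PI else acos (1 - c ^ 2 / l1 ^ 2).

Definition Dc (c th : R) : R := sin th / c.

Definition Bf (l1 l2 : R) (phi : R -> R) (u : R) : R :=
  l1 ^ 2 * (cos (phi u)) ^ 2 + l2 ^ 2 * (sin (phi u)) ^ 2.

Definition phid (l1 l2 c th : R) (phi : R -> R) (u : R) : R :=
  sqrt (c ^ 2 + 2 * cos th * Bf l1 l2 phi u - (Dc c th) ^ 2 * (Bf l1 l2 phi u) ^ 2).

Definition is_phi (l1 l2 c th : R) (phi : R -> R) : Prop :=
  phi 0 = 0 /\ forall u, is_derive phi u (phid l1 l2 c th phi u).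

Definition ff (l1 l2 c th : R) (phi : R -> R) (u : R) : R :=
  RInt (fun s => Dc c th * Bf l1 l2 phi s) 0 u.

Definition ffd (l1 l2 c th : R) (phi : R -> R) (u : R) : R :=
  Dc c th * Bf l1 l2 phi u.

Definition GG (l1 l2 c th : R) (phi : R -> R) (u : R) : R :=
  RInt (fun s => (c - phid l1 l2 c th phi s) / Bf l1 l2 phi s) 0 u.

Definition HH (l1 l2 c th : R) (phi : R -> R) (U : R) : R :=
  Dc c th * ff l1 l2 c th phi U + c * GG l1 l2 c th phi U.

Definition Xmap (l1 l2 c th : R) (phi : R -> R) (z : C) : R * R * R :=
  let u := fst z in
  let v := snd z in
  let D := Dc c th in
  let x3 := - l1 * l2 * D * v + l1 * l2 * GG l1 l2 c th phi u in
  let A := ff l1 l2 c th phi u + c * v in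
  let M1 := c * cos x3 * cosh A - l1 * l2 * D * sin x3 * sinh A in
  let M2 := c * cos x3 * sinh A - l1 * l2 * D * sin x3 * cosh A in
  let M3 := c * sin x3 * sinh A + l1 * l2 * D * cos x3 * cosh A in
  let M4 := c * sin x3 * cosh A + l1 * l2 * D * cos x3 * sinh A in
  let B := Bf l1 l2 phi u in
  let fd := ffd l1 l2 c th phi u in
  let pd := phid l1 l2 c th phi u in
  let ph := phi u in
  let k := - (1 / ((c ^ 2 + l1 ^ 2 * l2 ^ 2 * D ^ 2) * B)) in
  let x1 := k * ( (1 / l1) * fd * cos ph * M1
                - (1 / l1) * (c - pd) * sin ph * M2
                - (1 / l2) * (c - pd) * cos ph * M3
                - (1 / l2) * fd * sin ph * M4) in
  let x2 := k * ( (1 / l1) * fd * cos ph * M4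
                - (1 / l1) * (c - pd) * sin ph * M3
                + (1 / l2) * (c - pd) * cos ph * M2
                + (1 / l2) * fd * sin ph * M1) in
  (x1, x2, x3).

(* Main.v *)
Require Import Defs.
From Stdlib Require Import Reals Lra Lia.
From Coquelicot Require Import Coquelicot.
Open Scope R_scope.

Definition Bp (l1 l2 p : R) : R := l1 ^ 2 * (cos p) ^ 2 + l2 ^ 2 * (sin p) ^ 2.
Definition Qp (l1 l2 c th p : R) : R :=
  c ^ 2 + 2 * cos th * Bp l1 l2 p - (Dc c th) ^ 2 * (Bp l1 l2 p) ^ 2.
Definition Fp (l1 l2 c th p : R) : R := sqrt (Qp l1 l2 c th p).

Lemma Bp_shift l1 l2 p : Bp l1 l2 (p + PI) = Bp l1 l2 p.
Proof. unfold Bp. rewrite neg_cos, neg_sin. ring. Qed.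

Lemma Fp_shift l1 l2 c th p : Fp l1 l2 c th (p + PI) = Fp l1 l2 c th p.
Proof. unfold Fp, Qp. rewrite Bp_shift. reflexivity. Qed.

Lemma Bp_bounds l1 l2 p : 0 < l2 -> l2 ^ 2 <= l1 ^ 2 -> 0 < Bp l1 l2 p <= l1 ^ 2.
Proof.
  intros H2 H12. unfold Bp. pose proof (sin2_cos2 p). unfold Rsqr in H.
  pose proof (pow2_ge_0 (cos p)). pose proof (pow2_ge_0 (sin p)).
  split; nra.
Qed.

Lemma Qp_pos l1 l2 c th p : 0 < c -> 0 < l2 -> l2 ^ 2 <= l1 ^ 2 ->
  0 < cos th -> l1 ^ 2 * (1 - cos th) < c ^ 2 -> 0 < Qp l1 l2 c th p.
Proof.
  intros Hc H2 H12 Hco Hk. destruct (Bp_bounds l1 l2 p H2 H12) as [Bl Bu].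
  assert (E : Qp l1 l2 c th p * c ^ 2 =
     (c ^ 2 - (1 - cos th) * Bp l1 l2 p) * (c ^ 2 + (1 + cos th) * Bp l1 l2 p)).
  { unfold Qp, Dc. pose proof (sin2_cos2 th). unfold Rsqr in H.
    replace (sin th) with (sin th) by reflexivity.
    field_simplify; [|lra]. 
    replace (sin th ^ 2) with (1 - cos th ^ 2) by (simpl; lra). field. }
  assert (Hc2 : 0 < c ^ 2) by (apply pow_lt; lra).
  assert (P1 : 0 < c ^ 2 - (1 - cos th) * Bp l1 l2 p).
  { assert (0 <= 1 - cos th \/ 1 - cos th < 0) as [h|h] by lra; nra. }
  assert (P2 : 0 < c ^ 2 + (1 + cos th) * Bp l1 l2 p) by nra.
  assert (0 < Qp l1 l2 c th p * c ^ 2) by (rewrite E; nra). nra.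
Qed.
Lemma is_derive_change (f : R -> R) x d d' : is_derive f x d -> d = d' -> is_derive f x d'.
Proof. intros H ->; exact H. Qed.

Lemma RInt_deriv (g : R -> R) (Hc : forall x, continuous g x) x :
  is_derive (RInt g 0) x (g x).
Proof.
  apply is_derive_RInt with (a := 0).
  - apply filter_forall. intros b. apply RInt_correct.
    apply ex_RInt_continuous. intros; apply Hc.
  - apply Hc.
Qed.

Lemma const_of_deriv0 (h : R -> R) : (forall t, is_derive h t 0) -> forall a b, h a = h b.
Proof.
  intros H a b. destruct (Rtotal_order a b) as [Hl|[He|Hg]].
  - apply eq_is_derive; [intros; apply H | exact Hl].
  - rewrite He; reflexivity.
  - symmetry; apply eq_is_derive; [intros; apply H | exact Hg].
Qed.

Lemma RInt_periodic (g : R -> R) (P : R) (Hc : forall x, continuous g x)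
  (Hp : forall s, g (s + P) = g s) u :
  RInt g 0 (u + P) = RInt g 0 u + RInt g 0 P.
Proof.
  assert (H : forall t, is_derive (fun u => RInt g 0 (u + P) - RInt g 0 u) t 0).
  { intro t.
    apply is_derive_change with (minus (scal 1 (g (t + P))) (g t)).
    - apply (is_derive_minus (fun u => RInt g 0 (u + P)) (RInt g 0)).
      + apply (is_derive_comp (RInt g 0) (fun u => u + P)).
        * apply RInt_deriv; auto.
        * auto_derive; auto; ring.
      + apply RInt_deriv; auto.
    - rewrite Hp. unfold minus, plus, opp, scal; simpl. unfold mult; simpl. ring. }
  pose proof (const_of_deriv0 _ H u 0) as E. simpl in E.
  rewrite Rplus_0_l, RInt_point in E. unfold zero in E; simpl in E. lra.
Qed.

Lemma ode_uniq (F : R -> R) (HF : forall p, 0 < F p) (Hc : forall p, continuous F p)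
  (y1 y2 : R -> R) :
  (forall u, is_derive y1 u (F (y1 u))) -> (forall u, is_derive y2 u (F (y2 u))) ->
  y1 0 = y2 0 -> forall u, y1 u = y2 u.
Proof.
  intros H1 H2 H0.
  set (Phi := RInt (fun t => / F t) 0).
  assert (HcI : forall x, continuous (fun t => / F t) x).
  { intro x. apply continuous_Rinv_comp. apply Hc. apply Rgt_not_eq, HF. }
  assert (HPhi : forall x, is_derive Phi x (/ F x)).
  { intro x. apply (RInt_deriv (fun t => / F t)). auto. }
  assert (Key : forall y : R -> R, (forall u, is_derive y u (F (y u))) ->
            forall u, Phi (y u) - u = Phi (y 0) - 0).
  { intros y Hy u. apply (const_of_deriv0 (fun u => Phi (y u) - u)). intro t.
    apply is_derive_change with (minus (scal (F (y t)) (/ F (y t))) one).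
    - apply (is_derive_minus (fun u => Phi (y u)) (fun u => u)).
      + apply (is_derive_comp Phi y). apply HPhi. apply Hy.
      + auto_derive; auto.
    - unfold minus, plus, opp, scal, one; simpl. unfold mult; simpl.
      field. apply Rgt_not_eq, HF. }
  assert (Inj : forall a b, Phi a = Phi b -> a = b).
  { intros a b E. destruct (Req_dec a b) as [|Hne]; auto. exfalso.
    destruct (MVT_gen Phi a b (fun t => / F t)) as [x [_ Hx]].
    - intros; apply HPhi.
    - intros x _. apply continuity_pt_filterlim.
      apply (ex_derive_continuous Phi). eexists; apply HPhi.
    - rewrite E, Rminus_diag in Hx.
      symmetry in Hx. apply Rmult_integral in Hx. destruct Hx as [Hx|Hx].
      + pose proof (HF x). pose proof (Rinv_0_lt_compat _ H). lra.
      + apply Hne. lra. }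
  intro u. apply Inj. pose proof (Key y1 H1 u). pose proof (Key y2 H2 u).
  rewrite H0 in H. lra.
Qed.

Theorem theorem5p2 (l1 l2 c th : R) (phi : R -> R) (U : R) :
  ((l1 > l2 /\ l2 > 0) \/ (l1 = 1 /\ l2 = 1)) ->
  0 < c ->
  0 < th -> th < PI / 2 -> th < theta_plus l1 c ->
  is_phi l1 l2 c th phi ->
  0 < U -> phi U = PI ->
  HH l1 l2 c th phi U = 0 ->
  exists Z : C, Z <> 0%C /\
    forall z : C, Xmap l1 l2 c th phi (z + Z)%C = Xmap l1 l2 c th phi z.
Proof.
  intros Hl Hc Hth0 Hth1 Hthp [Hphi0 Hphi] HU HphiU HH0.
  assert (Hl1 : 0 < l1 /\ 0 < l2 /\ l2 ^ 2 <= l1 ^ 2).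
  { destruct Hl as [[a b]|[a b]]; subst; simpl; split; try nra; try lra. }
  destruct Hl1 as [Hl1 [Hl2 H12]].
  assert (Hco : 0 < cos th) by (apply cos_gt_0; lra).
  assert (Hco1 : cos th < 1).
  { rewrite <- cos_0. apply cos_decreasing_1; pose proof PI_RGT_0; lra. }
  assert (Hk : l1 ^ 2 * (1 - cos th) < c ^ 2).
  { unfold theta_plus in Hthp. destruct (Rlt_dec (sqrt 2 * l1) c) as [h|h].
    - assert (2 * l1 ^ 2 < c ^ 2).
      { assert (0 <= sqrt 2 * l1) by (apply Rmult_le_pos; [apply sqrt_pos|lra]).
        assert ((sqrt 2 * l1) ^ 2 < c ^ 2) by (simpl; nra).
        replace ((sqrt 2 * l1) ^ 2) with ((sqrt 2 * sqrt 2) * l1 ^ 2) in H0 by ring.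
        rewrite sqrt_sqrt in H0 by lra. lra. }
      nra.
    - apply Rnot_lt_le in h.
      assert (hc2 : c ^ 2 <= 2 * l1 ^ 2).
      { assert ((c) ^ 2 <= (sqrt 2 * l1) ^ 2) by (apply pow_incr; lra).
        replace ((sqrt 2 * l1) ^ 2) with ((sqrt 2 * sqrt 2) * l1 ^ 2) in H by ring.
        rewrite sqrt_sqrt in H by lra. lra. }
      assert (hl : 0 < l1 ^ 2) by (apply pow_lt; lra).
      set (x := 1 - c ^ 2 / l1 ^ 2) in *.
      assert (hx : -1 <= x <= 1).
      { unfold x. split.
        - assert (c ^ 2 / l1 ^ 2 <= 2).
          { apply (Rmult_le_reg_r (l1 ^ 2)); auto. field_simplify; lra. }
          lra.
        - assert (0 <= c ^ 2 / l1 ^ 2) by (apply Rdiv_le_0_compat; [apply pow2_ge_0|lra]). lra. }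
      assert (cos (acos x) < cos th).
      { apply cos_decreasing_1; try lra; pose proof (acos_bound x); lra. }
      rewrite cos_acos in H by auto. unfold x in H.
      assert (c ^ 2 / l1 ^ 2 * l1 ^ 2 = c ^ 2) by (field; lra). nra. }
  set (F := Fp l1 l2 c th).
  assert (HFpos : forall p, 0 < F p).
  { intro p. unfold F, Fp. apply sqrt_lt_R0. apply Qp_pos; auto. }
  assert (HFc : forall p, continuous F p).
  { intro p. apply (@ex_derive_continuous R_AbsRing R_NormedModule). unfold F, Fp, Qp, Bp.
    pose proof (Qp_pos l1 l2 c th p Hc Hl2 H12 Hco Hk) as Q. unfold Qp, Bp in Q.
    auto_derive. simpl in *. lra. }
  assert (Hphid : forall u, phid l1 l2 c th phi u = F (phi u)) by reflexivity.
  assert (Hphi' : forall u, is_derive phi u (F (phi u))).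
  { intro u. rewrite <- Hphid. apply Hphi. }
  assert (Hex : forall u, ex_derive phi u) by (intro u; eexists; apply Hphi').
  assert (Hshift : forall u, phi (u + U) = phi u + PI).
  { intro u.
    assert (E := ode_uniq F HFpos HFc (fun u => phi (u + U) - PI) phi).
    assert (phi (u + U) - PI = phi u); [|lra]. refine (E _ _ _ u); auto.
    - intro t. replace (F (phi (t + U) - PI)) with (F (phi (t + U))).
      + auto_derive. apply Hex.
        replace (Derive (fun x : R => phi x) (t + U)) with (F (phi (t + U))); [ring|].
        symmetry; apply is_derive_unique; apply Hphi'.
      + unfold F. rewrite <- (Fp_shift l1 l2 c th (phi (t + U) - PI)).
        f_equal. ring.
    - simpl. rewrite Rplus_0_l, HphiU, Hphi0. ring. }
  assert (HB : forall u, Bf l1 l2 phi (u + U) = Bf l1 l2 phi u).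
  { intro u. change (Bp l1 l2 (phi (u + U)) = Bp l1 l2 (phi u)).
    rewrite Hshift. apply Bp_shift. }
  assert (Hpd : forall u, phid l1 l2 c th phi (u + U) = phid l1 l2 c th phi u).
  { intro u. rewrite !Hphid, Hshift. apply Fp_shift. }
  assert (Hff : forall u, ff l1 l2 c th phi (u + U) = ff l1 l2 c th phi u + ff l1 l2 c th phi U).
  { intro u. unfold ff. apply RInt_periodic.
    - intro s. apply (@ex_derive_continuous R_AbsRing R_NormedModule). unfold Bf.
      auto_derive. repeat split; auto.
    - intro s. rewrite HB. reflexivity. }
  assert (HGG : forall u, GG l1 l2 c th phi (u + U) = GG l1 l2 c th phi u + GG l1 l2 c th phi U).
  { intro u. unfold GG. apply RInt_periodic.
    - intro s.
      apply (continuous_comp phi (fun p => (c - F p) / Bp l1 l2 p)).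
      + apply (@ex_derive_continuous R_AbsRing R_NormedModule); auto.
      + apply (@ex_derive_continuous R_AbsRing R_NormedModule). unfold F, Fp, Qp.
        pose proof (Qp_pos l1 l2 c th (phi s) Hc Hl2 H12 Hco Hk) as Q. unfold Qp in Q.
        pose proof (Bp_bounds l1 l2 (phi s) Hl2 H12) as BB. unfold Bp in *.
        auto_derive. simpl in *. repeat split; lra.
    - intro s. rewrite Hpd, HB. reflexivity. }
  exists (2 * U, - 2 * ff l1 l2 c th phi U / c)%R.
  split.
  { intro E. injection E. intros. lra. }
  assert (E2 : forall u, u + 2 * U = (u + U) + U) by (intro; ring).
  assert (Hph2 : forall u, phi (u + 2 * U) = phi u + PI + PI).
  { intro u. rewrite E2, !Hshift. reflexivity. }
  assert (Hcos : forall u, cos (phi (u + 2 * U)) = cos (phi u)).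
  { intro u. rewrite Hph2, !neg_cos. ring. }
  assert (Hsin : forall u, sin (phi (u + 2 * U)) = sin (phi u)).
  { intro u. rewrite Hph2, !neg_sin. ring. }
  assert (HB2 : forall u, Bf l1 l2 phi (u + 2 * U) = Bf l1 l2 phi u).
  { intro u. rewrite E2, !HB. reflexivity. }
  assert (Hpd2 : forall u, phid l1 l2 c th phi (u + 2 * U) = phid l1 l2 c th phi u).
  { intro u. rewrite E2, !Hpd. reflexivity. }
  assert (Hfd2 : forall u, ffd l1 l2 c th phi (u + 2 * U) = ffd l1 l2 c th phi u).
  { intro u. unfold ffd. rewrite HB2. reflexivity. }
  assert (Hff2 : forall u, ff l1 l2 c th phi (u + 2 * U) = ff l1 l2 c th phi u + 2 * ff l1 l2 c th phi U).
  { intro u. rewrite E2, !Hff. ring. }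
  assert (HGG2 : forall u, GG l1 l2 c th phi (u + 2 * U) = GG l1 l2 c th phi u + 2 * GG l1 l2 c th phi U).
  { intro u. rewrite E2, !HGG. ring. }
  intros [u v].
  unfold Xmap. cbn [fst snd Cplus].
  rewrite HB2, Hpd2, Hfd2, Hff2, HGG2, Hcos, Hsin.
  unfold HH in HH0.
  replace (- l1 * l2 * Dc c th * (v + -2 * ff l1 l2 c th phi U / c) +
        l1 * l2 * (GG l1 l2 c th phi u + 2 * GG l1 l2 c th phi U))
    with (- l1 * l2 * Dc c th * v + l1 * l2 * GG l1 l2 c th phi u).
  2:{ replace (GG l1 l2 c th phi U) with (- (Dc c th * ff l1 l2 c th phi U) / c) by (apply (Rmult_eq_reg_l c); [|lra];
        replace (c * (- (Dc c th * ff l1 l2 c th phi U) / c)) with (- (Dc c th * ff l1 l2 c th phi U)) by (field; lra);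
        lra).
      field. lra. }
  replace (ff l1 l2 c th phi u + 2 * ff l1 l2 c th phi U +
        c * (v + -2 * ff l1 l2 c th phi U / c))
    with (ff l1 l2 c th phi u + c * v) by (field; lra).
  reflexivity.
Qed.
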